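(* Let $n\ge3$, $\mu\ge0$ and $\alpha\ge1$, and let $V(r,\varphi)$ be the Maxwell-ring potential in polar coordinates described in the context. Then $V_r(1,\pi/n)<0$.
   Context: Let $\zeta=2\pi/n$, $\phi_\alpha'(r)=-r^{-\alpha}$, $s=2^{-\alpha}\sum_{j=1}^{n-1}\sin^{-(\alpha-1)}(j\zeta/2)$. In polar coordinates $u=re^{i\varphi}$, the planar potential of a satellite attracted by $n$ unit masses at $e^{ij\zeta}$ and a central mass $\mu$ at $0$ (rescaled) is $$V(r,\varphi)=\frac{r^2}{2}+\frac{\mu}{s+\mu}\phi_\alpha(r)+\sum_{j=1}^n\frac1{s+\mu}\phi_\alpha\big(\|r-e^{i(j\zeta-\varphi)}\|\big),$$ so that $V_r(r,\varphi)=r-\frac{\mu}{s+\mu}r^{-\alpha}-\frac1{s+\mu}\sum_{j=1}^n\frac{r-\cos(j\zeta-\varphi)}{\|r-e^{i(j\zeta-\varphi)}\|^{\alpha+1}}$. *)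

(* Defs.v *)
From Stdlib Require Import Reals.
From Coquelicot Require Import Coquelicot.
Open Scope R_scope.

(* Potential phi_alpha with phi_alpha'(r) = - r^(-alpha) on r > 0
   (normalized: -ln r if alpha = 1, r^(1-alpha)/(alpha-1) otherwise). *)
Definition phi (alpha r : R) : R :=
  if Req_EM_T alpha 1 then - ln r else Rpower r (1 - alpha) / (alpha - 1).

Definition zeta (n : nat) : R := 2 * PI / INR n.

Definition s_const (n : nat) (alpha : R) : R :=
  Rpower 2 (- alpha) *
  sum_n_m (fun j => Rpower (sin (INR j * zeta n / 2)) (- (alpha - 1))) 1 (n - 1).

(* || r - e^{i psi} || for real r *)
Definition dist_unit (r psi : R) : R :=
  sqrt ((r - cos psi) ^ 2 + (sin psi) ^ 2).

(* The (rescaled) planar potential in polar coordinates u = r e^{i varphi}. *)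
Definition V (n : nat) (mu alpha : R) (r varphi : R) : R :=
  r ^ 2 / 2 + mu / (s_const n alpha + mu) * phi alpha r
  + sum_n_m (fun j => / (s_const n alpha + mu) *
                      phi alpha (dist_unit r (INR j * zeta n - varphi))) 1 n.

(* Main.v *)
Require Import Defs.
From Stdlib Require Import Reals.
From Coquelicot Require Import Coquelicot.
From Stdlib Require Import Lra Psatz.
Open Scope R_scope.
Lemma Rpower_pos x y : 0 < Rpower x y.
Proof. unfold Rpower; apply exp_pos. Qed.

Lemma midconv (a b be : R) : 0 < a < PI -> 0 < b < PI -> 0 <= be ->
  2 * Rpower (sin ((a+b)/2)) (- be) <= Rpower (sin a) (- be) + Rpower (sin b) (- be).
Proof.
  intros Ha Hb Hbe.
  set (m := (a+b)/2). set (d := (a-b)/2).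
  assert (Hsa : 0 < sin a) by (apply sin_gt_0; lra).
  assert (Hsb : 0 < sin b) by (apply sin_gt_0; lra).
  assert (Hsm : 0 < sin m) by (apply sin_gt_0; unfold m; lra).
  assert (Hprod : sin a * sin b <= sin m * sin m).
  { replace a with (m + d) by (unfold m, d; lra).
    replace b with (m - d) by (unfold m, d; lra).
    rewrite sin_plus, sin_minus.
    pose proof (sin2_cos2 m). pose proof (sin2_cos2 d).
    unfold Rsqr in *. nra. }
  assert (E : forall X, 0 < X -> Rpower X (- be) = Rpower X (-(be/2)) * Rpower X (-(be/2))).
  { intros X HX. rewrite <- Rpower_plus. f_equal. lra. }
  rewrite (E _ Hsa), (E _ Hsb), (E _ Hsm).
  set (p := Rpower (sin a) (-(be/2))). set (q := Rpower (sin b) (-(be/2))).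
  set (u := Rpower (sin m) (-(be/2))).
  assert (Hpq : p * q = Rpower (sin a * sin b) (-(be/2))) by (apply Rpower_mult_distr; lra).
  assert (Huu : u * u = Rpower (sin m * sin m) (-(be/2))) by (apply Rpower_mult_distr; lra).
  assert (Hle : u * u <= p * q).
  { rewrite Hpq, Huu, !Rpower_Ropp. apply Rinv_le_contravar. apply Rpower_pos.
    apply Rle_Rpower_l. lra. split; [nra|exact Hprod]. }
  pose proof (Rle_0_sqr (p - q)); unfold Rsqr in *; nra.
Qed.

Lemma sum_ineq (n : nat) (be : R) : (1 <= n)%nat -> 0 <= be ->
  sum_n_m (fun j => Rpower (sin (INR j * PI / INR n)) (-be)) 1 (n-1)
  < sum_n_m (fun j => Rpower (sin ((2*INR j - 1)*PI/(2*INR n))) (-be)) 1 n.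
Proof.
  intros Hn Hbe.
  set (f := fun x => Rpower (sin x) (-be)).
  set (y := fun j:nat => (2*INR j - 1)*PI/(2*INR n)).
  set (x := fun j:nat => INR j * PI / INR n).
  change (sum_n_m (fun j => f (x j)) 1 (n-1) < sum_n_m (fun j => f (y j)) 1 n).
  assert (Hnpos : 0 < INR n) by (apply lt_0_INR; lia).
  assert (Hy : forall j, (1 <= j <= n)%nat -> 0 < y j < PI).
  { intros j Hj. unfold y.
    assert (1 <= INR j) by (apply (le_INR 1); lia).
    assert (INR j <= INR n) by (apply le_INR; lia).
    pose proof PI_RGT_0.
    split.
    - apply Rmult_lt_0_compat; [nra|]. apply Rinv_0_lt_compat; lra.
    - apply (Rmult_lt_reg_r (2 * INR n)); [lra|].
      unfold Rdiv. rewrite Rmult_assoc, Rinv_l by lra. nra. }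
  assert (Key : forall k, (k < n)%nat ->
     sum_n_m (fun j => f (y j)) 1 (S k) - sum_n_m (fun j => f (x j)) 1 k
     >= (f (y 1%nat) + f (y (S k))) / 2).
  { induction k as [|k IH]; intros Hk.
    - rewrite sum_n_n, sum_n_m_zero by lia. unfold zero; simpl. lra.
    - rewrite (sum_n_Sm (fun j => f (y j)) 1 (S k)) by lia. rewrite (sum_n_Sm (fun j => f (x j)) 1 k) by lia.
      unfold plus; simpl.
      specialize (IH ltac:(lia)).
      assert (Hc : 2 * f (x (S k)) <= f (y (S k)) + f (y (S (S k)))).
      { unfold f. replace (x (S k)) with ((y (S k) + y (S (S k)))/2).
        apply midconv; auto; apply Hy; lia.
        unfold x, y. rewrite !S_INR. field. lra. }
      lra. }
  assert (Hf : forall z, 0 < f z) by (intro; apply Rpower_pos).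
  destruct n as [|n']; [lia|].
  specialize (Key n' ltac:(lia)).
  replace (S n' - 1)%nat with n' by lia.
  pose proof (Hf (y 1%nat)); pose proof (Hf (y (S n'))). lra.
Qed.

Lemma is_derive_sum (f : nat -> R -> R) (f' : nat -> R) a b x :
  (forall j, (a <= j <= b)%nat -> is_derive (f j) x (f' j)) ->
  is_derive (fun r => sum_n_m (fun j => f j r) a b) x (sum_n_m f' a b).
Proof.
  induction b as [|b IH]; intros H.
  - destruct a as [|a].
    + rewrite sum_n_n. apply (is_derive_ext (f 0%nat)).
      { intro t. now rewrite sum_n_n. } apply H; lia.
    + rewrite sum_n_m_zero by lia.
      apply (is_derive_ext (fun _ => 0)). { intro t. now rewrite sum_n_m_zero by lia. }
      change (is_derive (fun _:R => 0) x 0). auto_derive; auto.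
  - destruct (Nat.lt_trichotomy a (S b)) as [Hl|[He|Hg]].
    + rewrite sum_n_Sm by lia.
      apply (is_derive_ext (fun r => plus (sum_n_m (fun j => f j r) a b) (f (S b) r))).
      { intro t. now rewrite sum_n_Sm by lia. }
      apply (@is_derive_plus R_AbsRing R_NormedModule). apply IH; intros; apply H; lia. apply H; lia.
    + subst. rewrite sum_n_n. apply (is_derive_ext (f (S b))).
      { intro t. now rewrite sum_n_n. } apply H; lia.
    + rewrite sum_n_m_zero by lia.
      apply (is_derive_ext (fun _ => 0)). { intro t. now rewrite sum_n_m_zero by lia. }
      change (is_derive (fun _:R => 0) x 0). auto_derive; auto.
Qed.

Lemma is_derive_eq (f : R -> R) (x l l' : R) : is_derive f x l -> l = l' -> is_derive f x l'.
Proof. intros H ->; exact H. Qed.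

Lemma phi_deriv alpha x : 0 < x -> is_derive (phi alpha) x (- Rpower x (- alpha)).
Proof.
  intros Hx. unfold phi. destruct (Req_EM_T alpha 1) as [->|Hne].
  - auto_derive. exact Hx.
    rewrite Rpower_Ropp, Rpower_1 by exact Hx. ring.
  - apply (is_derive_ext (fun r => / (alpha - 1) * Rpower r (1 - alpha))).
    { intro t. unfold Rdiv. apply Rmult_comm. }
    eapply is_derive_eq. apply is_derive_scal.
    apply is_derive_Reals. apply derivable_pt_lim_power, Hx.
    replace (1 - alpha - 1) with (- alpha) by ring.
    field. intro; apply Hne; lra.
Qed.

Lemma dist_deriv x psi : 0 < dist_unit x psi ->
  is_derive (fun r => dist_unit r psi) x ((x - cos psi) / dist_unit x psi).
Proof.
  intros H. unfold dist_unit in *. assert (Hp : 0 < (x - cos psi) ^ 2 + sin psi ^ 2).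
  { apply Rnot_le_lt; intro Hle. rewrite sqrt_neg_0 in H by exact Hle. lra. }
  auto_derive. simpl in Hp. lra.
  replace ((x + - cos psi) * ((x + - cos psi) * 1) + sin psi * (sin psi * 1)) with ((x - cos psi) ^ 2 + sin psi ^ 2) by ring. field. lra.
Qed.
Lemma sum_pos (g : nat -> R) a b : (a <= b)%nat -> (forall k, 0 < g k) -> 0 < sum_n_m g a b.
Proof.
  intros Hab Hg. rewrite sum_Sn_m by exact Hab. unfold plus; simpl.
  assert (0 <= sum_n_m g (S a) b).
  { apply Rle_trans with (sum_n_m (fun _ => 0) (S a) b).
    rewrite sum_n_m_const. lra. apply sum_n_m_le. intro k; apply Rlt_le, Hg. }
  specialize (Hg a). lra.
Qed.

Theorem mainTheorem8 (n : nat) (mu alpha : R) :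
  (3 <= n)%nat -> 0 <= mu -> 1 <= alpha ->
  Derive (fun r => V n mu alpha r (PI / INR n)) 1 < 0.
Proof.
  intros Hn Hmu Hal.
  assert (Hnpos : 0 < INR n) by (apply lt_0_INR; lia).
  set (K := Rpower 2 (- alpha)).
  set (X := sum_n_m (fun j => Rpower (sin (INR j * PI / INR n)) (-(alpha - 1))) 1 (n-1)).
  set (Y := sum_n_m (fun j => Rpower (sin ((2*INR j - 1)*PI/(2*INR n))) (-(alpha - 1))) 1 n).
  assert (HS : s_const n alpha = K * X).
  { unfold s_const, K, X. f_equal. apply sum_n_m_ext. intro j. f_equal. f_equal.
    unfold zeta. field. lra. }
  assert (HXY : X < Y) by (apply sum_ineq; lia || lra).
  assert (HX : 0 < X) by (apply sum_pos; [lia| intro; apply Rpower_pos]).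
  assert (HK : 0 < K) by apply Rpower_pos.
  set (S := s_const n alpha) in *.
  assert (HKX : 0 < K * X) by (apply Rmult_lt_0_compat; assumption).
  assert (HSmu : 0 < S + mu) by (rewrite HS; lra).
  set (c := / (S + mu)).
  set (psi := fun j : nat => INR j * zeta n - PI / INR n).
  set (sg := fun j : nat => sin ((2*INR j - 1)*PI/(2*INR n))).
  assert (Hterm : forall j, (1 <= j <= n)%nat ->
    0 < sg j /\ dist_unit 1 (psi j) = 2 * sg j /\ 1 - cos (psi j) = 2 * sg j * sg j).
  { intros j Hj.
    assert (Hh : psi j = 2 * ((2*INR j - 1)*PI/(2*INR n))).
    { unfold psi, zeta. field. lra. }
    assert (Hpos : 0 < sg j).
    { unfold sg.
      assert (1 <= INR j) by (apply (le_INR 1); lia).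
      assert (INR j <= INR n) by (apply le_INR; lia).
      pose proof PI_RGT_0.
      apply sin_gt_0.
      - apply Rmult_lt_0_compat; [nra|]. apply Rinv_0_lt_compat; lra.
      - apply (Rmult_lt_reg_r (2 * INR n)); [lra|].
        unfold Rdiv. rewrite Rmult_assoc, Rinv_l by lra. nra. }
    assert (Hc : 1 - cos (psi j) = 2 * sg j * sg j).
    { rewrite Hh, cos_2a_sin. unfold sg. ring. }
    split; [exact Hpos|split; [|exact Hc]].
    unfold dist_unit. rewrite <- (sqrt_square (2 * sg j)) by lra. f_equal.
    assert (Hs : sin (psi j) = 2 * sg j * cos ((2*INR j - 1)*PI/(2*INR n))).
    { rewrite Hh, sin_2a. unfold sg. ring. }
    rewrite Hs. pose proof (sin2_cos2 ((2*INR j - 1)*PI/(2*INR n))).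
    unfold Rsqr in *. fold (sg j) in H.
    replace (1 - cos (psi j)) with (2 * sg j * sg j) by lra.
    replace ((cos (psi j) - 1)) with (- (2 * sg j * sg j)) by lra.
    nra. }
  set (D := 1 + mu / (S + mu) * (- Rpower 1 (- alpha)) +
            sum_n_m (fun j => - (c * K * Rpower (sg j) (-(alpha - 1)))) 1 n).
  assert (Hder : is_derive (fun r => V n mu alpha r (PI / INR n)) 1 D).
  { unfold V, D. fold S. fold c.
    apply (@is_derive_plus R_AbsRing R_NormedModule).
    apply (@is_derive_plus R_AbsRing R_NormedModule).
    - auto_derive; auto. field.
    - apply is_derive_scal. apply phi_deriv. lra.
    - apply is_derive_sum. intros j Hj.
      destruct (Hterm j Hj) as (Hp & Hd & Hc).
      apply is_derive_eq with (c * scal ((1 - cos (psi j)) / dist_unit 1 (psi j))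
                                  (- Rpower (dist_unit 1 (psi j)) (- alpha))).
      + apply is_derive_scal.
        apply (@is_derive_comp R_AbsRing R_NormedModule (phi alpha) (fun r => dist_unit r (psi j))).
        apply phi_deriv. rewrite Hd. lra.
        apply dist_deriv. rewrite Hd. lra.
      + unfold scal; simpl. unfold mult; simpl.
        rewrite Hd, Hc.
        rewrite <- Rpower_mult_distr by lra. fold K.
        replace (-(alpha - 1)) with (1 + - alpha) by ring.
        rewrite Rpower_plus, Rpower_1 by exact Hp.
        field. lra. }
  assert (HD : Derive (fun r => V n mu alpha r (PI / INR n)) 1 = D) by (apply is_derive_unique; exact Hder). rewrite HD.
  unfold D.
  assert (Hsum : sum_n_m (fun j => - (c * K * Rpower (sg j) (-(alpha - 1)))) 1 n = - (c * K) * Y).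
  { unfold Y. change (- (c * K) * sum_n_m (fun j => Rpower (sin ((2*INR j - 1)*PI/(2*INR n))) (-(alpha - 1))) 1 n)
      with (mult (- (c * K)) (sum_n_m (fun j => Rpower (sin ((2*INR j - 1)*PI/(2*INR n))) (-(alpha - 1))) 1 n)).
    rewrite <- (@sum_n_m_mult_l R_Ring). apply sum_n_m_ext. intro j. unfold mult; simpl.
    unfold sg. ring. }
  rewrite Hsum.
  assert (H1 : Rpower 1 (- alpha) = 1) by (unfold Rpower; rewrite ln_1, Rmult_0_r; apply exp_0).
  rewrite H1. unfold c. rewrite HS in *.
  apply (Rmult_lt_reg_r (K * X + mu)). lra.
  field_simplify; [|lra]. nra.
Qed.
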